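(* Suppose $(X_A,\sigma_A)$ and $(X_B,\sigma_B)$ are continuously orbit equivalent via a homeomorphism $h:X_A\to X_B$. Let $f\in C(X_B,\mathbb Z_+)$ and $g\in C(X_A,\mathbb Z_+)$ be such that $[f]$ is an order unit of $(H^B,H^B_+)$ and $[g]$ is an order unit of $(H^A,H^A_+)$. Then there exist $l_f,k_f\in C(X_A,\mathbb Z_+)$ and $l_g,k_g\in C(X_B,\mathbb Z_+)$ such that $(l_f,k_f,0)$ and $(l_g,k_g,0)$ are suspension triplets for $(X_A,\sigma_A)$ and $(X_B,\sigma_B)$ respectively, and continuous maps $\Phi_f:S^{l_f,k_f}_A\to S^f_B$ and $\Phi_g:S^{l_g,k_g}_B\to S^g_A$ such that $\Phi_f\circ\phi_{A,t}=\phi_{B,t}\circ\Phi_f$ and $\Phi_g\circ\phi_{B,t}=\phi_{A,t}\circ\Phi_g$ for all $t\in\mathbb R_+$, and $\Phi_f([x,0])=[h(x),0]$ for all $x\in X_A$, $\Phi_g([y,0])=[h^{-1}(y),0]$ for all $y\in X_B$.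
   Context: Let $N,M>1$ and let $A$ ($N\times N$), $B$ ($M\times M$) be irreducible $\{0,1\}$-matrices which are not permutation matrices. $X_A$ is the compact space of sequences $(x_n)_{n\in\mathbb N}$ with $x_n\in\{1,\dots,N\}$, $A(x_n,x_{n+1})=1$, and $\sigma_A((x_n)_n)=(x_{n+1})_n$; similarly $(X_B,\sigma_B)$. $\mathbb Z_+$, $\mathbb R_+$ denote nonnegative integers/reals. $H^A$ is the quotient of $C(X_A,\mathbb Z)$ by $\{u-u\circ\sigma_A: u\in C(X_A,\mathbb Z)\}$, $[f]$ the class, $H^A_+=\{[f]: f\in C(X_A,\mathbb Z_+)\}$; $[f]\in H^A_+$ is an order unit if for every $[u]\in H^A$ some $n\in\mathbb N$ has $n[f]-[u]\in H^A_+$. Same for $B$. A suspension triplet for $(X_A,\sigma_A)$ is $(l,k,b)$ with $l,k\in C(X_A,\mathbb R_+)$, $b\in C(X_A,\mathbb R)$, $c=l-k$ integer-valued with $[c]$ an order unit, and $l-b$, $k-b\circ\sigma_A$ $\mathbb Z_+$-valued. $S^{l,k}_{A,b}$ is the quotient of $\{(x,r)\in X_A\times\mathbb R: r\ge b(x)\}$ by the equivalence relation generated by $(x,r)\sim(\sigma_A(x),r-c(x))$ for $r\ge l(x)$, with classes $[x,r]$ and flow $\phi_{A,t}([x,r])=[x,r+t]$ ($t\in\mathbb R_+$). Notation: $S^{l,k}_A:=S^{l,k}_{A,0}$ and $S^{l}_A:=S^{l,0}_{A,0}$; similarly for $B$. Continuous orbit equivalence via $h$: $h:X_A\to X_B$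 is a homeomorphism and there are continuous $k_1,l_1:X_A\to\mathbb Z_+$, $k_2,l_2:X_B\to\mathbb Z_+$ with $\sigma_B^{k_1(x)}(h(\sigma_A(x)))=\sigma_B^{l_1(x)}(h(x))$ for all $x\in X_A$ and $\sigma_A^{k_2(y)}(h^{-1}(\sigma_B(y)))=\sigma_A^{l_2(y)}(h^{-1}(y))$ for all $y\in X_B$. *)

(* Defs.v *)
From HB Require Import structures.
From mathcomp Require Import all_boot all_order all_fingroup all_algebra.
From mathcomp Require Import reals.
From Stdlib Require Import Relation_Operators.
Set Implicit Arguments. Unset Strict Implicit. Unset Printing Implicit Defensive.
Import Order.TTheory GRing.Theory Num.Theory.
Local Open Scope ring_scope.

(* Alphabet {1,..,N} is represented by 'I_N = {0,..,N-1}. *)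
Definition sq (N : nat) := nat -> 'I_N.

Definition zero_one_mx (N : nat) (A : 'M[int]_N) : Prop :=
  forall i j, A i j = 0 \/ A i j = 1.

Definition irreducible_mx (N : nat) (A : 'M[int]_N) : Prop :=
  forall i j, exists n : nat, (0 < n)%N /\ 0 < (A ^+ n) i j.

Definition is_perm_matrix (N : nat) (A : 'M[int]_N) : Prop :=
  exists s : 'S_N, A = perm_mx s.

Definition inX (N : nat) (A : 'M[int]_N) (x : sq N) : Prop :=
  forall n, A (x n) (x n.+1) = 1.

Definition shift (N : nat) (x : sq N) : sq N := fun n => x n.+1.

(* agreement on the first m coordinates (cylinder neighbourhoods) *)
Definition agree (N : nat) (m : nat) (x y : sq N) : Prop :=
  forall i, (i < m)%N -> x i = y i.

(* continuity of a map into a discrete space (Z, Z_+, ...) on X_A *)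
Definition loc_const (N : nat) (A : 'M[int]_N) (T : Type) (f : sq N -> T) : Prop :=
  forall x, inX A x -> exists m, forall y, inX A y -> agree m y x -> f y = f x.

Definition contR (R : realType) (N : nat) (A : 'M[int]_N) (f : sq N -> R) : Prop :=
  forall x, inX A x -> forall e : R, 0 < e ->
    exists m, forall y, inX A y -> agree m y x -> `|f y - f x| < e.

Definition cont_map (N M : nat) (A : 'M[int]_N) (h : sq N -> sq M) : Prop :=
  forall x, inX A x -> forall m, exists n, forall y, inX A y -> agree n y x ->
    agree m (h y) (h x).

(* [f] in H^A is an order unit: for every u in C(X_A,Z) some n in N has
   n[f] - [u] in H^A_+, i.e. n f - u = v + (w - w o sigma_A) on X_A
   for some v in C(X_A,Z_+) and w in C(X_A,Z). *)
Definition order_unit (N : nat) (A : 'M[int]_N) (f : sq N -> int) : Prop :=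
  forall u : sq N -> int, loc_const A u ->
    exists n : nat, exists v w : sq N -> int,
      [/\ loc_const A v, loc_const A w,
          (forall x, inX A x -> 0 <= v x) &
          (forall x, inX A x -> f x *+ n - u x = v x + (w x - w (shift x)))].

Definition susp_triplet (R : realType) (N : nat) (A : 'M[int]_N)
    (l k b : sq N -> R) : Prop :=
  [/\ contR A l /\ contR A k /\ contR A b,
      (forall x, inX A x -> 0 <= l x /\ 0 <= k x),
      (exists c : sq N -> int, [/\ loc_const A c,
          (forall x, inX A x -> (c x)%:~R = l x - k x) & order_unit A c]) &
      (forall x, inX A x ->
         (exists z : nat, l x - b x = z%:R) /\
         (exists z : nat, k x - b (shift x) = z%:R))].

(* representatives: pairs (x,r) with x in X_A, r >= b(x) *)
Definition pt (R : realType) (N : nat) := (sq N * R)%type.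

Definition inD (R : realType) (N : nat) (A : 'M[int]_N) (b : sq N -> R)
    (p : pt R N) : Prop := inX A p.1 /\ b p.1 <= p.2.

Definition step (R : realType) (N : nat) (A : 'M[int]_N) (l k b : sq N -> R)
    (p q : pt R N) : Prop :=
  [/\ inD A b p, l p.1 <= p.2 & q = (shift p.1, p.2 - (l p.1 - k p.1))].

(* the equivalence relation generated by step; classes are the points [x,r] *)
Definition susp_eq (R : realType) (N : nat) (A : 'M[int]_N) (l k b : sq N -> R) :
  pt R N -> pt R N -> Prop := clos_refl_sym_trans _ (step A l k b).

(* relatively open subsets of the domain D (product topology of X_A x R) *)
Definition open_in_D (R : realType) (N : nat) (A : 'M[int]_N) (b : sq N -> R)
    (U : pt R N -> Prop) : Prop :=
  forall p, inD A b p -> U p -> exists m, exists2 e : R, 0 < e &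
    forall q, inD A b q -> agree m q.1 p.1 -> `|q.2 - p.2| < e -> U q.

Definition saturated (R : realType) (N : nat) (A : 'M[int]_N) (l k b : sq N -> R)
    (U : pt R N -> Prop) : Prop :=
  forall p q, inD A b p -> inD A b q -> susp_eq A l k b p q -> U p -> U q.

(* A map Phi : S^{l,k}_{A,b} -> S^{l',k'}_{B,b'} presented on representatives by
   Psi (Phi [p] = [Psi p]).  Phi is continuous for the quotient topologies iff
   preimages under Psi of saturated open sets of D_B are open in D_A. *)
Definition flow_map (R : realType) (N M : nat) (A : 'M[int]_N) (B : 'M[int]_M)
    (l k b : sq N -> R) (l' k' b' : sq M -> R) (hb : sq N -> sq M)
    (Psi : pt R N -> pt R M) : Prop :=
  [/\ (forall p, inD A b p -> inD B b' (Psi p)),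
      (forall p q, inD A b p -> inD A b q -> susp_eq A l k b p q ->
          susp_eq B l' k' b' (Psi p) (Psi q)),
      (forall U : pt R M -> Prop, open_in_D B b' U -> saturated B l' k' b' U ->
          open_in_D A b (fun p => U (Psi p))),
      (forall p (t : R), inD A b p -> 0 <= t ->
          susp_eq B l' k' b' (Psi (p.1, p.2 + t)) ((Psi p).1, (Psi p).2 + t)) &
      (forall x, inX A x -> susp_eq B l' k' b' (Psi (x, 0)) (hb x, 0))].

Definition coe (N M : nat) (A : 'M[int]_N) (B : 'M[int]_M)
    (h : sq N -> sq M) (hinv : sq M -> sq N) : Prop :=
  [/\ (forall x, inX A x -> inX B (h x)) /\
      (forall y, inX B y -> inX A (hinv y)),
      (forall x, inX A x -> hinv (h x) = x),
      (forall y, inX B y -> h (hinv y) = y) /\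
      cont_map A h /\ cont_map B hinv,
      (exists k1 l1 : sq N -> nat, loc_const A k1 /\ loc_const A l1 /\
         forall x, inX A x ->
           iter (k1 x) (@shift M) (h (shift x)) = iter (l1 x) (@shift M) (h x)) &
      (exists k2 l2 : sq M -> nat, loc_const B k2 /\ loc_const B l2 /\
         forall y, inX B y ->
           iter (k2 y) (@shift N) (hinv (shift y)) = iter (l2 y) (@shift N) (hinv y))].

(* Main.v *)
Require Import Defs.
From HB Require Import structures.
From mathcomp Require Import all_boot all_order all_fingroup all_algebra.
From mathcomp Require Import reals.
From mathcomp Require Import zify ring lra.
From Stdlib Require Import Relation_Operators ClassicalEpsilon Classical FunctionalExtensionality.
Import Order.TTheory GRing.Theory Num.Theory.
Set Implicit Arguments. Unset Strict Implicit. Unset Printing Implicit Defensive.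
Local Open Scope ring_scope.

Section Basics.
Variables (N : nat) (A : 'M[int]_N).

Lemma iter_shiftE (i : nat) (x : sq N) t : iter i (@shift N) x t = x (i + t)%N.
Proof. elim: i t => [|i IH] t //=. by rewrite /shift IH addSnnS. Qed.

Lemma inX_shift x : inX A x -> inX A (shift x).
Proof. by move=> H n; apply: H. Qed.

Lemma inX_iter i x : inX A x -> inX A (iter i (@shift N) x).
Proof. by elim: i => [|i IH] //= Hx; apply: inX_shift; apply: IH. Qed.

Lemma agree_le m n (x y : sq N) : (n <= m)%N -> agree m x y -> agree n x y.
Proof. by move=> Hnm H i Hi; apply: H; apply: leq_trans Hnm. Qed.

Lemma agree_sym m (x y : sq N) : agree m x y -> agree m y x.
Proof. by move=> H i Hi; rewrite H. Qed.

Lemma agree_trans m (x y z : sq N) : agree m x y -> agree m y z -> agree m x z.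
Proof. by move=> H1 H2 i Hi; rewrite H1 // H2. Qed.

Lemma agree_shift m (x y : sq N) : agree m.+1 x y -> agree m (shift x) (shift y).
Proof. by move=> H i Hi; apply: H. Qed.

Lemma agree_iter i m (x y : sq N) : agree (i + m) x y ->
  agree m (iter i (@shift N) x) (iter i (@shift N) y).
Proof. move=> H t Ht; rewrite !iter_shiftE; apply: H; lia. Qed.

Lemma lc_const T (c : T) : loc_const A (fun _ => c).
Proof. by move=> x _; exists 0%N. Qed.

Lemma lc_op T1 T2 T3 (op : T1 -> T2 -> T3) u v :
  loc_const A u -> loc_const A v -> loc_const A (fun x => op (u x) (v x)).
Proof.
move=> Hu Hv x Hx; case: (Hu x Hx) => m1 H1; case: (Hv x Hx) => m2 H2.
exists (maxn m1 m2) => y Hy Ha.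
rewrite H1 ?H2 //; apply: agree_le Ha; lia.
Qed.

Lemma lc_shift T (u : sq N -> T) : loc_const A u -> loc_const A (fun x => u (shift x)).
Proof.
move=> Hu x Hx; case: (Hu _ (inX_shift Hx)) => m H.
exists m.+1 => y Hy Ha; apply: H; [exact: inX_shift | exact: agree_shift].
Qed.

Lemma lc_iter T (u : sq N -> T) i : loc_const A u ->
  loc_const A (fun x => u (iter i (@shift N) x)).
Proof.
elim: i u => [|i IH] u Hu //=.
exact: (IH (fun x => u (shift x)) (lc_shift Hu)).
Qed.

Lemma lc_sum_fixed (F : nat -> sq N -> int) n :
  (forall i, loc_const A (F i)) -> loc_const A (fun x => \sum_(i < n) F i x).
Proof.
move=> HF; elim: n => [|n IH].
  have -> : (fun x => \sum_(i < 0) F i x) = (fun _ => 0).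
    by apply: functional_extensionality => x; rewrite big_ord0.
  exact: lc_const.
have -> : (fun x => \sum_(i < n.+1) F i x) = (fun x => \sum_(i < n) F i x + F n x).
  by apply: functional_extensionality => x; rewrite big_ord_recr.
exact: lc_op.
Qed.

Lemma lc_sum_fixedn (F : nat -> sq N -> nat) n :
  (forall i, loc_const A (F i)) -> loc_const A (fun x => (\sum_(i < n) F i x)%N).
Proof.
move=> HF; elim: n => [|n IH].
  have -> : (fun x => (\sum_(i < 0) F i x)%N) = (fun _ => 0%N).
    by apply: functional_extensionality => x; rewrite big_ord0.
  exact: lc_const.
have -> : (fun x => (\sum_(i < n.+1) F i x)%N) = (fun x => (\sum_(i < n) F i x) + F n x)%N.
  by apply: functional_extensionality => x; rewrite big_ord_recr.
exact: lc_op.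
Qed.

Lemma lc_sum_var (F : nat -> sq N -> int) (n : sq N -> nat) :
  (forall i, loc_const A (F i)) -> loc_const A n ->
  loc_const A (fun x => \sum_(i < n x) F i x).
Proof.
move=> HF Hn x Hx.
case: (lc_sum_fixed (n x) HF Hx) => m1 H1; case: (Hn x Hx) => m2 H2.
exists (maxn m1 m2) => y Hy Ha.
rewrite (H2 y Hy); last by apply: agree_le Ha; lia.
apply: H1 => //; apply: agree_le Ha; lia.
Qed.

End Basics.

Lemma lc_comp N M (A : 'M[int]_N) (B : 'M[int]_M) (h : sq N -> sq M) T (u : sq M -> T) :
  cont_map A h -> (forall x, inX A x -> inX B (h x)) -> loc_const B u ->
  loc_const A (fun x => u (h x)).
Proof.
move=> Hc Hh Hu x Hx; case: (Hu _ (Hh x Hx)) => m H.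
case: (Hc x Hx m) => n Hn; exists n => y Hy Ha; apply: H; [exact: Hh | exact: Hn].
Qed.
Definition bsum N (f : sq N -> int) n (y : sq N) := \sum_(i < n) f (iter i (@shift N) y).
Definition bsumn N (f : sq N -> nat) n (y : sq N) := (\sum_(i < n) f (iter i (@shift N) y))%N.

Lemma iter_comm N a b (y : sq N) :
  iter a (@shift N) (iter b (@shift N) y) = iter b (@shift N) (iter a (@shift N) y).
Proof. by rewrite -!iterD addnC. Qed.

Lemma bsumD N (f : sq N -> int) a b y :
  bsum f (a + b) y = bsum f a y + bsum f b (iter a (@shift N) y).
Proof.
rewrite /bsum big_split_ord /=; apply: congr1.
by apply: eq_bigr => i _; rewrite addnC iterD.
Qed.

Lemma bsumS N (f : sq N -> int) n y : bsum f n.+1 y = bsum f n y + f (iter n (@shift N) y).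
Proof. by rewrite /bsum big_ord_recr. Qed.

Lemma bsumnS N (f : sq N -> nat) n y : bsumn f n.+1 y = (bsumn f n y + f (iter n (@shift N) y))%N.
Proof. by rewrite /bsumn big_ord_recr. Qed.

Lemma bsum0 N (f : sq N -> int) y : bsum f 0 y = 0.
Proof. by rewrite /bsum big_ord0. Qed.

Lemma bsumn0 N (f : sq N -> nat) y : bsumn f 0 y = 0%N.
Proof. by rewrite /bsumn big_ord0. Qed.

Lemma bsum_ge0 N (A : 'M[int]_N) (f : sq N -> int) n y : inX A y ->
  (forall z, inX A z -> 0 <= f z) -> 0 <= bsum f n y.
Proof.
move=> Hy Hf; rewrite /bsum; apply: sumr_ge0 => i _; apply: Hf; exact: inX_iter.
Qed.

Lemma bsum_eq N (A : 'M[int]_N) (f g : sq N -> int) n y : inX A y ->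
  (forall z, inX A z -> f z = g z) -> bsum f n y = bsum g n y.
Proof.
move=> Hy Hf; rewrite /bsum; apply: eq_bigr => i _; apply: Hf; exact: inX_iter.
Qed.

Section Cocycle.
Variables (N M : nat) (A : 'M[int]_N) (B : 'M[int]_M).
Variables (h : sq N -> sq M) (k1 l1 : sq N -> nat).
Hypothesis hrel : forall x, inX A x ->
  iter (k1 x) (@shift M) (h (shift x)) = iter (l1 x) (@shift M) (h x).

Lemma rel_iter K x : inX A x ->
  iter (bsumn l1 K x) (@shift M) (h x) =
  iter (bsumn k1 K x) (@shift M) (h (iter K (@shift N) x)).
Proof.
move=> Hx; elim: K => [|K IH]; first by rewrite !bsumn0.
rewrite !bsumnS [in LHS]addnC [in RHS]addnC !iterD IH iter_comm.
rewrite -hrel; last exact: inX_iter.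
by rewrite iter_comm.
Qed.

Variable f : sq M -> int.
Definition ecoc x := bsum f (l1 x) (h x) - bsum f (k1 x) (h (shift x)).

Lemma ecoc_iter K x : inX A x ->
  bsum ecoc K x = bsum f (bsumn l1 K x) (h x) - bsum f (bsumn k1 K x) (h (iter K (@shift N) x)).
Proof.
move=> Hx; elim: K => [|K IH]; first by rewrite bsum0 !bsumn0 !bsum0 subrr.
rewrite bsumS IH /ecoc !bsumnS [(bsumn k1 K x + _)%N]addnC !bsumD rel_iter //.
set y' := h (iter K (@shift N) x).
set z := h (shift (iter K (@shift N) x)).
set a := bsumn l1 K x; set b := bsumn k1 K x.
set l := l1 (iter K (@shift N) x); set k := k1 (iter K (@shift N) x).
have E2 : iter k (@shift M) z = iter l (@shift M) y' by exact: hrel (inX_iter K Hx).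
rewrite E2.
have H1 := bsumD f b l y'; have H2 := bsumD f l b y'.
rewrite addnC in H2; rewrite H1 in H2.
have -> : bsum f l (iter b (@shift M) y') = bsum f l y' + bsum f b (iter l (@shift M) y') - bsum f b y'.
  by move: H2; lia.
ring.
Qed.

End Cocycle.

Lemma fin_bound (T : finType) (P : T -> nat -> Prop) :
  (forall t n n', (n <= n')%N -> P t n -> P t n') -> (forall t, exists n, P t n) ->
  exists n, forall t, P t n.
Proof.
move=> Hmono Hex.
suff: forall l : seq T, exists n, forall t, t \in l -> P t n.
  by case/(_ (enum T)) => n Hn; exists n => t; apply: Hn; rewrite mem_enum.
elim=> [|a l [n IH]]; first by exists 0%N.
case: (Hex a) => na Ha; exists (maxn n na) => t; rewrite inE; case/orP.
  by move/eqP ->; apply: Hmono Ha; exact: leq_maxr.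
by move=> Ht; apply: Hmono (IH t Ht); exact: leq_maxl.
Qed.

Section Compact.
Variables (N : nat) (A : 'M[int]_N).

Definition badp T (u : sq N -> T) n s m := exists x y, inX A x /\ inX A y /\
  agree n x s /\ agree n y s /\ agree m x y /\ u x <> u y.

Lemma unif_window T (u : sq N -> T) : loc_const A u ->
  exists m, forall x y, inX A x -> inX A y -> agree m x y -> u x = u y.
Proof.
move=> Hu; apply: NNPP => Hne.
have H : forall m, exists x y, inX A x /\ inX A y /\ agree m x y /\ u x <> u y.
  move=> m; apply: NNPP => Hn; apply: Hne; exists m => x y Hx Hy Ha.
  by apply: NNPP => Hneq; apply: Hn; exists x, y.
pose bad n s := forall m, badp u n s m.
have ext : forall n s, bad n s -> exists s', agree n s' s /\ bad n.+1 s'.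
  move=> n s Hb; apply: NNPP => Hn.
  pose upd (a : 'I_N) := fun t => if t == n then a else s t.
  have Hall : forall a, exists M0, ~ badp u n.+1 (upd a) M0.
    move=> a; apply: NNPP => Ha; apply: Hn; exists (upd a); split.
      by move=> t Ht; rewrite /upd (ltn_eqF Ht).
    by move=> m; apply: NNPP => Hm; apply: Ha; exists m.
  have [M0 HM0] := @fin_bound _ (fun a M0 => ~ badp u n.+1 (upd a) M0) 
    (fun t n0 n' Hle Hnb Hb' => Hnb (let: ex_intro x (ex_intro y (conj a1 (conj a2 (conj a3 (conj a4 (conj a5 a6)))))) := Hb' in
        ex_intro _ x (ex_intro _ y (conj a1 (conj a2 (conj a3 (conj a4 (conj (agree_le Hle a5) a6)))))))) Hall.
  case: (Hb (maxn M0 n.+1)) => x [y [Hx [Hy [Hxs [Hys [Hxy Hne']]]]]].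
  apply: (HM0 (x n)); exists x, y; do 2 (split; first by []).
  split.
    move=> t Ht; rewrite /upd; case: eqP => [->|Htn] //; apply: Hxs; lia.
  split.
    move=> t Ht; rewrite /upd; case: eqP => [->|Htn].
      by symmetry; apply: Hxy; lia.
    apply: Hys; lia.
  by split=> //; apply: agree_le Hxy; lia.
have Hch : forall p : nat * sq N, exists s', bad p.1 p.2 -> agree p.1 s' p.2 /\ bad p.1.+1 s'.
  move=> [n s] /=; case: (classic (bad n s)) => Hb.
    by case: (ext n s Hb) => s' Hs'; exists s'.
  by exists s.
pose next n s := proj1_sig (constructive_indefinite_description _ (Hch (n, s))).
have Hnext : forall n s, bad n s -> agree n (next n s) s /\ bad n.+1 (next n s).
  by move=> n s; exact: (proj2_sig (constructive_indefinite_description _ (Hch (n, s)))).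
have [s0 _] := H 0%N.
pose S := nat_rect (fun _ => sq N) s0 (fun n s => next n s).
have HS : forall n, bad n (S n).
  elim=> [|n IH] /=; first by move=> m; case: (H m) => x [y [Hx [Hy [Ha Hn]]]]; exists x, y.
  exact: (Hnext n (S n) IH).2.
have HSa : forall n k, agree n (S (n + k)%N) (S n).
  move=> n; elim=> [|k IH]; first by rewrite addn0.
  rewrite addnS; apply: agree_trans IH.
  apply: (agree_le (leq_addr k n)); exact: (Hnext _ _ (HS _)).1.
pose x := fun t => S t.+1 t.
have Hxa : forall n, agree n x (S n).
  move=> n t Ht; rewrite /x.
  have -> : n = (t.+1 + (n - t.+1))%N by lia.
  by symmetry; apply: HSa.
have Hx : inX A x.
  move=> t; case: (HS t.+2 0%N) => z [_ [Hz [_ [Hzs _]]]].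
  rewrite (Hxa t.+2 t) // (Hxa t.+2 t.+1) // -(Hzs t) // -(Hzs t.+1) //; exact: Hz.
case: (Hu x Hx) => m0 Hm0.
case: (HS m0 0%N) => x' [y' [Hx' [Hy' [Hx's [Hy's [_ Hneq]]]]]].
apply: Hneq; rewrite (Hm0 x') // ?(Hm0 y') //.
  by apply: agree_trans Hy's (agree_sym (Hxa m0)).
by apply: agree_trans Hx's (agree_sym (Hxa m0)).
Qed.

Definition win m (x : sq N) : {ffun 'I_m -> 'I_N} := [ffun i : 'I_m => x i].

Lemma win_agree m (x y : sq N) : win m x = win m y -> agree m x y.
Proof.
move=> H t Ht; have := congr1 (fun f : {ffun 'I_m -> 'I_N} => f (Ordinal Ht)) H; by rewrite !ffunE.
Qed.

Lemma lc_bounded (u : sq N -> int) : loc_const A u ->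
  exists E : nat, forall x, inX A x -> (`|u x| <= E)%N.
Proof.
move=> Hu; case: (unif_window Hu) => m Hm.
have [E HE] : exists E, forall w, forall x, inX A x -> win m x = w -> (`|u x| <= E)%N.
  apply: fin_bound; first by move=> t n n' Hle H x Hx Hw; exact: leq_trans (H x Hx Hw) Hle.
  move=> w; case: (classic (exists x0, inX A x0 /\ win m x0 = w)).
    case=> x0 [Hx0 Hw0]; exists `|u x0|%N => x Hx Hw.
    by rewrite (Hm x x0) //; apply: win_agree; rewrite Hw Hw0.
  move=> Hn; exists 0%N => x Hx Hw; exfalso; apply: Hn; by exists x.
by exists E => x Hx; apply: (HE (win m x)).
Qed.

End Compact.

Section Loop.
Variables (N : nat) (A : 'M[int]_N).

Lemma modS_eq t d : (t.+1 %% d = (t %% d).+1 %% d)%N.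
Proof. by rewrite -addn1 -modnDml addn1. Qed.

Lemma pigeon m (x : sq N) : exists i j, (i < j <= #|{ffun 'I_m -> 'I_N}|)%N /\
  agree m (iter i (@shift N) x) (iter j (@shift N) x).
Proof.
set W := #|{ffun 'I_m -> 'I_N}|.
pose F := fun i : 'I_W.+1 => win m (iter i (@shift N) x).
have Hni : ~ injective F by move/leq_card; rewrite card_ord ltnn.
have [i0 [j0 [Hij Hne]]] : exists i0 j0, F i0 = F j0 /\ i0 <> j0.
  apply: NNPP => Hn; apply: Hni => i0 j0 Heq; apply: NNPP => Hne; apply: Hn; by exists i0, j0.
have Hi0 := ltn_ord i0; have Hj0 := ltn_ord j0.
case: (ltngtP i0 j0) => Hlt.
- exists i0, j0; split; first by rewrite Hlt /=; lia.
  exact: win_agree.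
- exists j0, i0; split; first by rewrite Hlt /=; lia.
  exact: win_agree.
- by exfalso; apply: Hne; apply: val_inj.
Qed.

Variables (x : sq N) (i d m : nat).
Hypothesis Hx : inX A x.
Hypothesis Hd : (0 < d)%N.
Hypothesis Hm : (0 < m)%N.
Hypothesis Hwe : forall r, (r < m)%N -> x (i + d + r)%N = x (i + r)%N.

Lemma per_F1 r : (r < d + m)%N -> x (i + r)%N = x (i + r %% d)%N.
Proof.
elim/ltn_ind: r => r IH Hr.
case: (ltnP r d) => Hrd; first by rewrite modn_small.
have -> : r = (d + (r - d))%N by lia.
rewrite addnA Hwe; last by lia.
rewrite modnDl IH //; lia.
Qed.

Definition wper := fun t => x (i + t %% d)%N.
Definition xcut := fun t => if (t < i)%N then x t else x (t + d)%N.

Lemma wper_inX : inX A wper.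
Proof.
move=> t; rewrite /wper modS_eq.
have Hr : (t %% d < d)%N by rewrite ltn_mod.
case: (ltnP (t %% d).+1 d) => H.
  by rewrite (modn_small H) addnS; apply: Hx.
have Heq : (t %% d).+1 = d by lia.
rewrite Heq modnn addn0.
have -> : x i = x (i + d)%N by rewrite (per_F1 (r := d)) ?modnn ?addn0 //; lia.
by have := Hx (i + t %% d)%N; rewrite -addnS Heq.
Qed.

Lemma wper_per : iter d (@shift N) wper = wper.
Proof.
apply: functional_extensionality => t; rewrite iter_shiftE /wper.
by rewrite modnDl.
Qed.

Lemma xcut_inX : inX A xcut.
Proof.
move=> t; rewrite /xcut.
case: (ltnP t.+1 i) => H1.
  by rewrite (ltnW H1); apply: Hx.
case: (ltnP t i) => H2.
  have Ht : t.+1 = i by lia.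
  rewrite Ht; have := Hwe Hm; rewrite !addn0 => ->; rewrite -Ht; exact: Hx.
by rewrite /= addSn; apply: Hx.
Qed.

Lemma xcut_agree t : (t < i)%N ->
  agree m (iter t (@shift N) xcut) (iter t (@shift N) x).
Proof.
move=> Ht s Hs; rewrite !iter_shiftE /xcut.
case: ifP => // /negbT; rewrite -leqNgt => Hle.
have -> : (t + s + d = i + d + (t + s - i))%N by lia.
rewrite Hwe; last by lia.
congr x; lia.
Qed.

Lemma xcut_shift : iter i (@shift N) xcut = iter (i + d) (@shift N) x.
Proof.
apply: functional_extensionality => s; rewrite !iter_shiftE /xcut.
rewrite ltnNge leq_addr /=; congr x; lia.
Qed.

Lemma wper_agree t : (t < d)%N ->
  agree m (iter t (@shift N) wper) (iter t (@shift N) (iter i (@shift N) x)).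
Proof.
move=> Ht s Hs; rewrite !iter_shiftE /wper.
by rewrite -per_F1 //; lia.
Qed.

Variable e : sq N -> int.
Hypothesis Hwin : forall y z, inX A y -> inX A z -> agree m y z -> e y = e z.

Lemma cut_decomp K : (i + d <= K)%N ->
  bsum e K x = bsum e (K - d) xcut + bsum e d wper.
Proof.
move=> HK.
have -> : K = (i + (d + (K - i - d)))%N by lia.
have -> : (i + (d + (K - i - d)) - d = i + (K - i - d))%N by lia.
rewrite !bsumD xcut_shift iter_comm -iterD.
have -> : bsum e i xcut = bsum e i x.
  apply: eq_bigr => -[t Ht] _ /=; apply: Hwin.
  - apply: inX_iter; exact: xcut_inX.
  - exact: inX_iter.
  - exact: xcut_agree.
have -> : bsum e d wper = bsum e d (iter i (@shift N) x).
  apply: eq_bigr => -[t Ht] _ /=; apply: Hwin.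
  - apply: inX_iter; exact: wper_inX.
  - apply: inX_iter; exact: inX_iter.
  - exact: wper_agree.
ring.
Qed.

End Loop.

Lemma dummy_sep : True. Proof. by []. Qed.

Lemma loop_cut N (A : 'M[int]_N) (e : sq N -> int) m (E : nat) :
  (0 < m)%N ->
  (forall y z, inX A y -> inX A z -> agree m y z -> e y = e z) ->
  (forall y, inX A y -> - (E%:Z) <= e y) ->
  (forall w p, inX A w -> (0 < p)%N -> iter p (@shift N) w = w -> 1 <= bsum e p w) ->
  exists K, forall y, inX A y -> 1 <= bsum e K y.
Proof.
move=> Hm Hwin HE Hper.
set W := #|{ffun 'I_m -> 'I_N}|.
set C : int := (W%:Z + W%:Z * W%:Z * E%:Z).
have Hmain : forall K y, inX A y -> K%:Z - C <= W%:Z * bsum e K y.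
  elim/ltn_ind => K IH y Hy.
  case: (leqP K W) => HKW.
    have Hb : - (E%:Z) * K%:Z <= bsum e K y.
      elim: (K) => [|k IHk]; first by rewrite bsum0 mulr0.
      rewrite bsumS; have := HE _ (inX_iter k Hy); move: IHk; lia.
    have HW0 : (0 <= W%:Z) by [].
    have HE0 : (0 <= E%:Z) by [].
    have H2 := ler_wpM2l HW0 Hb.
    apply: le_trans H2.
    have H3 : (W%:Z * E%:Z) * K%:Z <= (W%:Z * E%:Z) * W%:Z.
      apply: ler_wpM2l; first exact: mulr_ge0.
      by rewrite lez_nat.
    rewrite /C; move: H3; have : (K%:Z <= W%:Z) by rewrite lez_nat.
    lia.
  case: (pigeon m y) => i [j [Hij Ha]].
  set d := (j - i)%N.
  have Hd : (0 < d)%N by rewrite /d; lia.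
  have Hwe : forall r, (r < m)%N -> y (i + d + r)%N = y (i + r)%N.
    move=> r Hr; have := Ha r Hr; rewrite !iter_shiftE => ->; congr y; rewrite /d; lia.
  rewrite (@cut_decomp N A y i d m Hy Hd Hm Hwe e Hwin); last by rewrite /d; lia.
  have H1 := IH (K - d)%N ltac:(rewrite /d; lia) _ (@xcut_inX N A y i d m Hy Hd Hm Hwe).
  have H2 := Hper _ _ (@wper_inX N A y i d m Hy Hd Hm Hwe) Hd (wper_per y i d).
  have HdW : (d <= W)%N by rewrite /d; lia.
  have : W%:Z * 1 <= W%:Z * bsum e d (wper y i d) by apply: ler_wpM2l.
  move: H1; rewrite -subzn; last by lia.
  move: HdW; lia.
exists (`|C|%N + 1)%N => y Hy.
have := Hmain (`|C|%N + 1)%N y Hy.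
lia.
Qed.

Lemma bsum_shift1 N (e : sq N -> int) i x :
  bsum e i x - bsum e i (shift x) = e x - e (iter i (@shift N) x).
Proof.
have H1 := bsumS e i x.
have H2 := bsumD e 1 i x.
rewrite add1n /bsum big_ord1 /= in H2.
rewrite /bsum in H1 *.
move: H1 H2; set S := \sum_(i0 < i.+1) _; move=> H1 H2.
have -> : \sum_(i0 < i) e (iter i0 (@shift N) (shift x)) = S - e x by rewrite H2 addrC addKr.
rewrite H1; lia.
Qed.

Lemma cob_sum N (e : sq N -> int) K x :
  \sum_(i < K) bsum e i x - \sum_(i < K) bsum e i (shift x) = e x *+ K - bsum e K x.
Proof.
elim: K => [|K IH]; first by rewrite !big_ord0 bsum0 subrr.
rewrite !big_ord_recr /= bsumS mulrS.
have := bsum_shift1 e K x; move: IH.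
set a := \sum_(i < K) bsum e i x; set b := \sum_(i < K) bsum e i (shift x).
set c := e x *+ K.
lia.
Qed.

Lemma lc_bsum N (A : 'M[int]_N) (e : sq N -> int) K : loc_const A e -> loc_const A (bsum e K).
Proof.
move=> He; apply: (@lc_sum_fixed _ A (fun i x => e (iter i (@shift N) x)) K).
by move=> i; apply: lc_iter.
Qed.

Lemma ou_of_K N (A : 'M[int]_N) (e : sq N -> int) : loc_const A e ->
  (exists K, forall x, inX A x -> 1 <= bsum e K x) -> order_unit A e.
Proof.
move=> He [K HK] u Hu.
case: (lc_bounded Hu) => U HU.
exists (U * K)%N, (fun x => U%:Z * bsum e K x - u x),
  (fun x => U%:Z * \sum_(i < K) bsum e i x); split.
- apply: (@lc_op _ A _ _ _ (fun a b => a - b) (fun x => U%:Z * bsum e K x) u); last exact: Hu.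
  apply: (@lc_op _ A _ _ _ (fun a b => a * b) (fun _ => U%:Z) (bsum e K)); [exact: lc_const | exact: lc_bsum].
- apply: (@lc_op _ A _ _ _ (fun a b => a * b) (fun _ => U%:Z)); first exact: lc_const.
  exact: (@lc_sum_fixed _ A (fun i x => bsum e i x) K (fun i => lc_bsum i He)).
- move=> x Hx; have := HK x Hx; have := HU x Hx.
  have : (0 <= U%:Z) by [].
  move=> H0 Hu1 Hk.
  have Hux : u x <= U%:Z.
    apply: le_trans (ler_norm (u x)) _.
    by rewrite -[`|u x|]abszE lez_nat.
  have : U%:Z * 1 <= U%:Z * bsum e K x by apply: ler_wpM2l.
  move: Hux; lia.
- move=> x Hx.
  have Hc := cob_sum e K x.
  rewrite -mulrBr Hc.
  rewrite mulnC mulrnA -mulr_natl natz mulrBr; lia.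
Qed.

Lemma bsum_telescope N (w : sq N -> int) q z :
  bsum (fun y => w y - w (shift y)) q z = w z - w (iter q (@shift N) z).
Proof.
elim: q => [|q IH]; first by rewrite bsum0 subrr.
rewrite bsumS IH /=; lia.
Qed.

Lemma bsum_split N (g1 g2 : sq N -> int) q z :
  bsum (fun y => g1 y + g2 y) q z = bsum g1 q z + bsum g2 q z.
Proof. by rewrite /bsum big_split. Qed.

Lemma per_pos M (B : 'M[int]_M) (f : sq M -> int) : order_unit B f ->
  forall z q, inX B z -> (0 < q)%N -> iter q (@shift M) z = z -> 1 <= bsum f q z.
Proof.
move=> Hfu z q Hz Hq Hper.
case: (Hfu (fun _ => 1) (lc_const (A := B) (1 : int))) => n [v [w [_ _ Hv Heq]]].
have H1 : bsum (fun y => f y *+ n - 1) q z = bsum v q z + bsum (fun y => w y - w (shift y)) q z.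
  rewrite -bsum_split; apply: (bsum_eq (A := B)) => // y Hy; exact: Heq.
rewrite bsum_telescope Hper subrr addr0 in H1.
have H2 : bsum (fun y => f y *+ n - 1) q z = bsum f q z *+ n - q%:Z.
  elim: (q) => [|k IHk]; first by rewrite !bsum0 mul0rn subr0.
  rewrite !bsumS IHk mulrnDl; lia.
have H3 : 0 <= bsum v q z by apply: (bsum_ge0 (A := B)).
rewrite H2 in H1.
have : q%:Z <= bsum f q z *+ n by move: H3; rewrite -H1; lia.
rewrite -mulr_natr natz.
case: (lerP (bsum f q z) 0) => // Hle.
have : bsum f q z * n%:Z <= 0 by apply: mulr_le0_ge0.
move: Hq; lia.
Qed.

Section Paths.
Variables (N : nat) (A : 'M[int]_N).
Hypothesis HA01 : zero_one_mx A.
Hypothesis HAirr : irreducible_mx A.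
Hypothesis HAperm : ~ is_perm_matrix A.

Lemma pow_ge0 k i j : 0 <= (A ^+ k) i j.
Proof.
elim: k i j => [|k IH] i j.
  rewrite expr0 mxE; by case: (i == j).
rewrite exprS -mulmxE mxE; apply: sumr_ge0 => l _; apply: mulr_ge0 => //.
by case: (HA01 i l) => ->.
Qed.

Lemma path_of_pow k i j : 0 < (A ^+ k) i j ->
  exists pi : nat -> 'I_N, pi 0%N = i /\ pi k = j /\
    forall t, (t < k)%N -> A (pi t) (pi t.+1) = 1.
Proof.
elim: k i j => [|k IH] i j.
  rewrite expr0 mxE; case: eqP => [->|]; last by rewrite ltxx.
  by move=> _; exists (fun _ => j).
rewrite exprS -mulmxE mxE => Hpos.
have [l Hl] : exists l, 0 < A i l * (A ^+ k) l j.
  apply: NNPP => Hn; move: Hpos; rewrite ltNge => /negP; apply.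
  apply: sumr_le0 => l _; rewrite leNgt; apply/negP => Hl; apply: Hn; by exists l.
have HAil : A i l = 1.
  case: (HA01 i l) => // H0; by rewrite H0 mul0r ltxx in Hl.
rewrite HAil mul1r in Hl.
case: (IH _ _ Hl) => pi [H0 [Hk Hp]].
exists (fun t => if t is t'.+1 then pi t' else i); split => //; split => //.
case=> [|t] Ht /=; first by rewrite H0.
apply: Hp; lia.
Qed.

Lemma succ_ex i : exists j, A i j = 1.
Proof.
case: (HAirr i i) => k [Hk Hpos]; case: (path_of_pow Hpos) => pi [H0 [_ Hp]].
exists (pi 1%N); rewrite -H0; exact: Hp.
Qed.

Definition sc (i : 'I_N) : 'I_N := proj1_sig (constructive_indefinite_description _ (succ_ex i)).
Lemma scP i : A i (sc i) = 1.
Proof. exact: (proj2_sig (constructive_indefinite_description _ (succ_ex i))). Qed.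

Definition ray (s : 'I_N) : sq N := fun t => iter t sc s.
Lemma ray_inX s : inX A (ray s).
Proof. move=> t; rewrite /ray /=; exact: scP. Qed.

Lemma branch : exists i0 j1 j2, j1 <> j2 /\ A i0 j1 = 1 /\ A i0 j2 = 1.
Proof.
apply: NNPP => Hn.
have Huniq : forall i j, A i j = 1 -> j = sc i.
  move=> i j Hij; apply: NNPP => Hne; apply: Hn; exists i, j, (sc i); split => //; split => //.
  exact: scP.
have Hsurj : forall j, exists i, sc i = j.
  move=> j; case: (HAirr j j) => k [Hk Hpos]; case: (path_of_pow Hpos) => pi [_ [Hkj Hp]].
  exists (pi k.-1); symmetry; apply: Huniq; rewrite -Hkj.
  have := Hp k.-1; rewrite prednK //; apply; lia.
pose g (j : 'I_N) := proj1_sig (constructive_indefinite_description _ (Hsurj j)).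
have Hg : forall j, sc (g j) = j.
  by move=> j; exact: (proj2_sig (constructive_indefinite_description _ (Hsurj j))).
have Hginj : injective g by move=> j1 j2 Heq; rewrite -(Hg j1) -(Hg j2) Heq.
have [g' Hgg' Hg'g] := inj_card_bij Hginj (leqnn _).
have Hsc : forall i, sc i = g' i.
  by move=> i; rewrite -{1}(Hg'g i) Hg.
have Hinj : injective sc by move=> i1 i2; rewrite !Hsc; exact: (can_inj Hg'g).
apply: HAperm; exists (perm Hinj); apply/matrixP => i j.
rewrite /perm_mx /row_perm !mxE permE.
case: (HA01 i j) => Hij.
  rewrite Hij; case: eqP => // Heq; exfalso; by rewrite -Heq scP in Hij.
by rewrite Hij -(Huniq _ _ Hij) eqxx.
Qed.

Definition glue n (u : sq N) (y : sq N) : sq N := fun t => if (t < n)%N then u t else y (t - n)%N.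

Lemma glue_inX n u y : inX A y -> (forall t, (t.+1 < n)%N -> A (u t) (u t.+1) = 1) ->
  ((0 < n)%N -> A (u n.-1) (y 0%N) = 1) -> inX A (glue n u y).
Proof.
move=> Hy Hu Hn t; rewrite /glue.
case: (ltnP t.+1 n) => H1.
  rewrite (ltnW H1); exact: Hu.
case: (ltnP t n) => H2.
  have Ht : t.+1 = n by lia.
  rewrite Ht subnn; have -> : t = n.-1 by lia.
  by apply: Hn; lia.
have -> : (t.+1 - n = (t - n).+1)%N by lia.
exact: Hy.
Qed.

Lemma two_points s : exists y1 y2, inX A y1 /\ inX A y2 /\ y1 0%N = s /\ y2 0%N = s /\ y1 <> y2.
Proof.
case: branch => i0 [j1 [j2 [Hne [H1 H2]]]].
case: (HAirr s i0) => k [Hk Hpos]; case: (path_of_pow Hpos) => pi [H0 [Hki Hp]].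
have Hg : forall j, A i0 j = 1 -> inX A (glue k.+1 pi (ray j)).
  move=> j Hj; apply: glue_inX; first exact: ray_inX.
    move=> t Ht; apply: Hp; lia.
  by move=> _ /=; rewrite Hki.
exists (glue k.+1 pi (ray j1)), (glue k.+1 pi (ray j2)).
split; first exact: Hg.
split; first exact: Hg.
split; first by rewrite /glue /= H0.
split; first by rewrite /glue /= H0.
move=> Heq; have := congr1 (fun y => y k.+1) Heq; rewrite /glue ltnn subnn /ray /=.
exact: Hne.
Qed.

Lemma non_isolated w n : inX A w -> exists x, inX A x /\ agree n x w /\ x <> w.
Proof.
move=> Hw; case: (two_points (w n)) => y1 [y2 [Hy1 [Hy2 [H1 [H2 Hne]]]]].
have Hg : forall y, inX A y -> y 0%N = w n -> inX A (glue n w y) /\ agree n (glue n w y) w.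
  move=> y Hy Hy0; split.
    apply: glue_inX.
    - exact: Hy.
    - by move=> t _; apply: Hw.
    - move=> Hn; rewrite Hy0; have := Hw n.-1; by rewrite prednK.
  by move=> t Ht; rewrite /glue Ht.
case: (Hg y1 Hy1 H1) => Hx1 Ha1; case: (Hg y2 Hy2 H2) => Hx2 Ha2.
case: (classic (glue n w y1 = w)) => Heq1.
  exists (glue n w y2); split => //; split => // Heq2; apply: Hne.
  apply: functional_extensionality => t.
  have := congr1 (fun y => y (n + t)%N) Heq1; have := congr1 (fun y => y (n + t)%N) Heq2.
  rewrite /glue ltnNge leq_addr /= addKn => -> ->; by [].
by exists (glue n w y1).
Qed.

End Paths.

Lemma iter_mul_per N p j (w : sq N) : iter p (@shift N) w = w -> iter (j * p) (@shift N) w = w.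
Proof. move=> Hp; elim: j => [|j IH] //; by rewrite mulSn iterD IH Hp. Qed.

Section Main.
Variables (N M : nat) (A : 'M[int]_N) (B : 'M[int]_M).
Hypothesis HA01 : zero_one_mx A.
Hypothesis HAirr : irreducible_mx A.
Hypothesis HAperm : ~ is_perm_matrix A.
Variables (h : sq N -> sq M) (hinv : sq M -> sq N) (k1 l1 : sq N -> nat).
Hypothesis Hh : forall x, inX A x -> inX B (h x).
Hypothesis Hhinv : forall y, inX B y -> inX A (hinv y).
Hypothesis Hhh : forall x, inX A x -> hinv (h x) = x.
Hypothesis Hch : cont_map A h.
Hypothesis Hchi : cont_map B hinv.
Hypothesis Hk1 : loc_const A k1.
Hypothesis Hl1 : loc_const A l1.
Hypothesis hrel : forall x, inX A x ->
  iter (k1 x) (@shift M) (h (shift x)) = iter (l1 x) (@shift M) (h x).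

Lemma orient w p : inX A w -> (0 < p)%N -> iter p (@shift N) w = w ->
  (bsumn k1 p w < bsumn l1 p w)%N.
Proof.
move=> Hw Hp Hper.
set a := bsumn l1 p w; set b := bsumn k1 p w.
rewrite ltnNge; apply/negP => Hab.
have Hv : iter a (@shift M) (h w) = iter b (@shift M) (h w).
  by have := rel_iter hrel p Hw; rewrite Hper.
have La : loc_const A (bsumn l1 p).
  by apply: (@lc_sum_fixedn _ A (fun i x => l1 (iter i (@shift N) x))) => i; apply: lc_iter.
have Lb : loc_const A (bsumn k1 p).
  by apply: (@lc_sum_fixedn _ A (fun i x => k1 (iter i (@shift N) x))) => i; apply: lc_iter.
case: (La w Hw) => ma Hma; case: (Lb w Hw) => mb Hmb.
case: (Hch Hw b) => n1 Hn1.
set MM := maxn (maxn ma mb) (p + n1).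
have HwB := Hh Hw.
case: (Hchi HwB MM) => M2 HM2.
rewrite Hhh // in HM2.
case: (Hch Hw M2) => n2 Hn2.
case: (non_isolated HA01 HAirr HAperm n2 Hw) => x [Hx [Hxa Hxne]].
have HxjA : forall j, inX A (iter (j * p) (@shift N) x) by move=> j; exact: inX_iter.
have Hstep : forall xj, inX A xj -> agree M2 (h xj) (h w) ->
    agree MM xj w /\ agree M2 (h (iter p (@shift N) xj)) (h w).
  move=> xj Hxj Hag.
  have HagM : agree MM xj w by rewrite -(Hhh Hxj); apply: HM2 => //; exact: Hh.
  split => //.
  have Haj : bsumn l1 p xj = a by apply: Hma => //; apply: agree_le HagM; lia.
  have Hbj : bsumn k1 p xj = b by apply: Hmb => //; apply: agree_le HagM; lia.
  have Hr := rel_iter hrel p Hxj; rewrite Haj Hbj in Hr.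
  have Hb1 : agree b (h (iter p (@shift N) xj)) (h w).
    apply: Hn1; first exact: inX_iter.
    rewrite -[X in agree _ _ X]Hper; apply: agree_iter; apply: agree_le HagM; lia.
  move=> t Ht; case: (ltnP t b) => Htb; first exact: Hb1.
  have E1 : h (iter p (@shift N) xj) t = iter b (@shift M) (h (iter p (@shift N) xj)) (t - b)%N.
    by rewrite iter_shiftE; congr (h _ _); lia.
  have E2 : h w t = iter b (@shift M) (h w) (t - b)%N.
    by rewrite iter_shiftE; congr (h _ _); lia.
  rewrite E1 E2 -Hr -Hv !iter_shiftE; apply: Hag; lia.
have Hall : forall j, agree M2 (h (iter (j * p) (@shift N) x)) (h w).
  elim=> [|j IH]; first by rewrite mul0n /=; apply: Hn2.
  by rewrite mulSn iterD; exact: (Hstep _ (HxjA j) IH).2.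
have HallM : forall j, agree MM (iter (j * p) (@shift N) x) w.
  by move=> j; exact: (Hstep _ (HxjA j) (Hall j)).1.
apply: Hxne; apply: functional_extensionality => t.
rewrite (divn_eq t p).
have Hr : (t %% p < p)%N by rewrite ltn_mod.
have := HallM (t %/ p)%N (t %% p)%N ltac:(lia).
rewrite iter_shiftE => ->.
have := congr1 (fun y => y (t %% p)%N) (iter_mul_per (t %/ p) Hper).
by rewrite /= iter_shiftE => ->.
Qed.

Variable f : sq M -> int.
Hypothesis Hfc : loc_const B f.
Hypothesis Hf0 : forall y, inX B y -> 0 <= f y.
Hypothesis Hfu : order_unit B f.

Lemma ecoc_lc : loc_const A (ecoc h k1 l1 f).
Proof.
rewrite /ecoc.
apply: (@lc_op _ A _ _ _ (fun a b => a - b)).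
  apply: (@lc_sum_var _ A (fun i x => f (iter i (@shift M) (h x))) l1) => // i.
  apply: (@lc_comp N M A B h _ (fun y => f (iter i (@shift M) y)) Hch Hh); exact: lc_iter.
apply: (@lc_sum_var _ A (fun i x => f (iter i (@shift M) (h (shift x)))) k1) => // i.
apply: (@lc_shift N A _ (fun x => f (iter i (@shift M) (h x)))).
apply: (@lc_comp N M A B h _ (fun y => f (iter i (@shift M) y)) Hch Hh); exact: lc_iter.
Qed.

Lemma ecoc_per w p : inX A w -> (0 < p)%N -> iter p (@shift N) w = w ->
  1 <= bsum (ecoc h k1 l1 f) p w.
Proof.
move=> Hw Hp Hper.
have Ho := orient Hw Hp Hper.
rewrite (ecoc_iter hrel) // Hper.
set a := bsumn l1 p w in Ho *; set b := bsumn k1 p w in Ho *.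
have Hv : iter a (@shift M) (h w) = iter b (@shift M) (h w).
  by have := rel_iter hrel p Hw; rewrite Hper.
have -> : a = (b + (a - b))%N by lia.
rewrite bsumD addrC addKr.
apply: (per_pos Hfu); first by apply: inX_iter; exact: Hh.
  lia.
rewrite -iterD addnC -Hv; congr iter; lia.
Qed.

Lemma ecoc_ou : order_unit A (ecoc h k1 l1 f).
Proof.
apply: ou_of_K; first exact: ecoc_lc.
case: (unif_window ecoc_lc) => m Hm.
case: (lc_bounded ecoc_lc) => E HE.
apply: (@loop_cut _ A _ m.+1 E) => //.
- move=> y z Hy Hz Ha; apply: Hm => //; apply: agree_le Ha; lia.
- move=> y Hy; have := HE y Hy; move: (ecoc h k1 l1 f y) => r; lia.
- move=> w p Hw Hp Hper; exact: ecoc_per.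
Qed.

End Main.

Lemma intr_posz (R : realType) (n : nat) : ((n%:Z)%:~R : R) = n%:R.
Proof. by []. Qed.

Lemma contR_int (R : realType) N (A : 'M[int]_N) (u : sq N -> int) :
  loc_const A u -> contR A (fun x => (u x)%:~R : R).
Proof.
move=> Hu x Hx e He; case: (Hu x Hx) => m Hm; exists m => y Hy Ha.
by rewrite (Hm y Hy Ha) subrr normr0.
Qed.

Lemma contR_0 (R : realType) N (A : 'M[int]_N) : contR A (fun _ => 0 : R).
Proof. by move=> x Hx e He; exists 0%N => y _ _; rewrite subrr normr0. Qed.

Lemma fwd_B (R : realType) M (B : 'M[int]_M) (f : sq M -> int) :
  (forall y, inX B y -> 0 <= f y) ->
  forall n y (r : R), inX B y -> (bsum f n y)%:~R <= r ->
  susp_eq B (fun y => (f y)%:~R : R) (fun _ => 0) (fun _ => 0)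
    (y, r) (iter n (@shift M) y, r - (bsum f n y)%:~R).
Proof.
move=> Hf0; elim=> [|n IH] y r Hy Hr.
  by rewrite bsum0 subr0; apply: rst_refl.
have Hfn : 0 <= f (iter n (@shift M) y) by apply: Hf0; exact: inX_iter.
have HS := bsumS f n y.
have Hle : (bsum f n y)%:~R <= r.
  apply: le_trans Hr; rewrite ler_int HS lerDl //.
apply: rst_trans (IH y r Hy Hle) _.
apply: rst_step; split.
- split => /=; first exact: inX_iter.
  by rewrite subr_ge0.
- rewrite /= lerBrDl -intrD -HS //.
- rewrite /= HS intrD; congr pair; by rewrite subr0 opprD addrA.
Qed.

Lemma half (R : realType) N M (A : 'M[int]_N) (B : 'M[int]_M)
  (HA01 : zero_one_mx A) (HAirr : irreducible_mx A) (HAperm : ~ is_perm_matrix A)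
  (h : sq N -> sq M) (hinv : sq M -> sq N) (k1 l1 : sq N -> nat)
  (Hh : forall x, inX A x -> inX B (h x))
  (Hhinv : forall y, inX B y -> inX A (hinv y))
  (Hhh : forall x, inX A x -> hinv (h x) = x)
  (Hch : cont_map A h) (Hchi : cont_map B hinv)
  (Hk1 : loc_const A k1) (Hl1 : loc_const A l1)
  (hrel : forall x, inX A x ->
     iter (k1 x) (@shift M) (h (shift x)) = iter (l1 x) (@shift M) (h x))
  (f : sq M -> int) (Hfc : loc_const B f) (Hf0 : forall y, inX B y -> 0 <= f y)
  (Hfu : order_unit B f) :
  exists lf kf : sq N -> int,
    [/\ loc_const A lf /\ loc_const A kf /\
          (forall x, inX A x -> 0 <= lf x /\ 0 <= kf x),
        susp_triplet A (fun x => (lf x)%:~R : R) (fun x => (kf x)%:~R) (fun _ => 0) &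
        exists Phi : pt R N -> pt R M,
          flow_map A B (fun x => (lf x)%:~R) (fun x => (kf x)%:~R) (fun _ => 0)
                       (fun y => (f y)%:~R) (fun _ => 0) (fun _ => 0) h Phi].
Proof.
pose lf := fun x => bsum f (l1 x) (h x).
pose kf := fun x => bsum f (k1 x) (h (shift x)).
have Llf : loc_const A lf.
  apply: (@lc_sum_var _ A (fun i x => f (iter i (@shift M) (h x))) l1) => // i.
  apply: (@lc_comp N M A B h _ (fun y => f (iter i (@shift M) y)) Hch Hh); exact: lc_iter.
have Lkf : loc_const A kf.
  apply: (@lc_sum_var _ A (fun i x => f (iter i (@shift M) (h (shift x)))) k1) => // i.
  apply: (@lc_shift N A _ (fun x => f (iter i (@shift M) (h x)))).
  apply: (@lc_comp N M A B h _ (fun y => f (iter i (@shift M) y)) Hch Hh); exact: lc_iter.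
have Hpos : forall x, inX A x -> 0 <= lf x /\ 0 <= kf x.
  move=> x Hx; split; apply: (bsum_ge0 (A := B)) => //; apply: Hh => //; exact: inX_shift.
exists lf, kf; split => //.
- split.
  + split; first exact: contR_int.
    split; first exact: contR_int.
    exact: contR_0.
  + move=> x Hx; case: (Hpos x Hx) => H1 H2; by rewrite !ler0z.
  + exists (ecoc h k1 l1 f); split.
    * exact: (ecoc_lc Hh Hch Hk1 Hl1 Hfc).
    * by move=> x Hx; rewrite /ecoc intrB.
    * exact: (ecoc_ou HA01 HAirr HAperm Hh Hhh Hch Hchi Hk1 Hl1 hrel Hfc Hfu).
  + move=> x Hx; case: (Hpos x Hx) => H1 H2; split.
    * exists `|lf x|%N; by rewrite subr0 -intr_posz gez0_abs.
    * exists `|kf x|%N; by rewrite subr0 -intr_posz gez0_abs.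
- exists (fun p => (h p.1, p.2)); split.
  + by move=> [x r] [Hx Hr] /=; split => //; exact: Hh.
  + move=> p q _ _ Hpq; elim: Hpq.
    * move=> [x r] q' [[Hx _] Hl ->] /=.
      rewrite /= in Hl.
      have H1 := @fwd_B R M B f Hf0 (l1 x) (h x) r (Hh _ Hx) Hl.
      have Hk : (kf x)%:~R <= r - ((lf x)%:~R - (kf x)%:~R) :> R by lra.
      have H2 := @fwd_B R M B f Hf0 (k1 x) (h (shift x)) (r - ((lf x)%:~R - (kf x)%:~R)) (Hh _ (inX_shift Hx)) Hk.
      rewrite hrel // in H2.
      have E : r - ((lf x)%:~R - (kf x)%:~R) - (kf x)%:~R = r - (lf x)%:~R :> R by ring.
      rewrite E in H2.
      eapply rst_trans; [exact H1 | apply: rst_sym; exact H2].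
    * by move=> p0; apply: rst_refl.
    * by move=> p0 q0 _ H; apply: rst_sym.
    * by move=> p0 q0 r0 _ H1 _ H2; apply: rst_trans H1 H2.
  + move=> U HU _ [x r] [Hx Hr] HUp.
    case: (HU (h x, r) (conj (Hh _ Hx) Hr) HUp) => m [e He Hm].
    case: (Hch _ Hx m) => n Hn.
    exists n; exists e => // [[y s]] [Hy Hs] Ha Hd.
    apply: Hm => //=; first by split => //; exact: Hh.
    exact: Hn.
  + by move=> p t _ _; apply: rst_refl.
  + by move=> x _; apply: rst_refl.
Qed.

Unset Implicit Arguments. Set Strict Implicit.

Theorem proposition3p6 (R : realType) (N M : nat)
    (A : 'M[int]_N) (B : 'M[int]_M)
    (hN : (1 < N)%N) (hM : (1 < M)%N)
    (hA01 : zero_one_mx A) (hB01 : zero_one_mx B)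
    (hAirr : irreducible_mx A) (hBirr : irreducible_mx B)
    (hAperm : ~ is_perm_matrix A) (hBperm : ~ is_perm_matrix B)
    (h : sq N -> sq M) (hinv : sq M -> sq N)
    (hcoe : coe A B h hinv)
    (f : sq M -> int) (g : sq N -> int)
    (hfc : loc_const B f) (hf0 : forall y, inX B y -> 0 <= f y)
    (hfu : order_unit B f)
    (hgc : loc_const A g) (hg0 : forall x, inX A x -> 0 <= g x)
    (hgu : order_unit A g) :
  exists (lf kf : sq N -> int) (lg kg : sq M -> int),
    [/\ loc_const A lf /\ loc_const A kf /\
          (forall x, inX A x -> 0 <= lf x /\ 0 <= kf x),
        loc_const B lg /\ loc_const B kg /\
          (forall y, inX B y -> 0 <= lg y /\ 0 <= kg y),
        susp_triplet A (fun x => (lf x)%:~R : R) (fun x => (kf x)%:~R) (fun _ => 0),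
        susp_triplet B (fun y => (lg y)%:~R : R) (fun y => (kg y)%:~R) (fun _ => 0) &
        (exists (Phif : pt R N -> pt R M) (Phig : pt R M -> pt R N),
          flow_map A B (fun x => (lf x)%:~R) (fun x => (kf x)%:~R) (fun _ => 0)
                       (fun y => (f y)%:~R) (fun _ => 0) (fun _ => 0) h Phif /\
          flow_map B A (fun y => (lg y)%:~R) (fun y => (kg y)%:~R) (fun _ => 0)
                       (fun x => (g x)%:~R) (fun _ => 0) (fun _ => 0) hinv Phig)].
Proof.
case: hcoe => [[Hh Hhi] Hhh [Hhh' [Ch Chi]] [k1 [l1 [Hk1 [Hl1 Hr1]]]] [k2 [l2 [Hk2 [Hl2 Hr2]]]]].
case: (@half R N M A B hA01 hAirr hAperm h hinv k1 l1 Hh Hhi Hhh Ch Chi Hk1 Hl1 Hr1 f hfc hf0 hfu)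
  => lf [kf [Hlk Htf [Phif HPf]]].
case: (@half R M N B A hB01 hBirr hBperm hinv h k2 l2 Hhi Hh Hhh' Chi Ch Hk2 Hl2 Hr2 g hgc hg0 hgu)
  => lg [kg [Hlkg Htg [Phig HPg]]].
by exists lf, kf, lg, kg; split => //; exists Phif, Phig.
Qed.
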